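(* Let $A$ be a real symmetric $n\times n$ matrix such that the graph $\mathcal{G}(A)$ is connected and all nonzero off-diagonal entries of $A$ have the same sign. Let $V=\{1,\dots,n\}$ be the vertex set of $\mathcal{G}(A)$ and let $S\subseteq V$ be a zero forcing set of $\mathcal{G}(A)$. Then the real Lie algebra generated by $A$ and $\{{\bf e}_j{\bf e}_j^T: j\in S\}$ equals $gl(n,\mathbb{R})$.
   Context: ${\bf e}_j$ is the $j$th standard basis vector of $\mathbb{R}^n$. For a real symmetric $A=[a_{kj}]$, $\mathcal{G}(A)$ is the simple graph on $\{1,\dots,n\}$ with edges $\{kj: a_{kj}\neq0,\ k\neq j\}$. Zero forcing: color each vertex of a graph black or white; a black vertex $v$ forces (infects) a white vertex $w$ if $w$ is the unique white neighbor of $v$, in which case $w$ is recolored black. A set $S$ of vertices is a zero forcing set if, starting with exactly the vertices in $S$ black and repeatedly applying forces, all vertices eventually become black. The real Lie algebra generated by a set of matrices is the smallest real vector space containing them closed under $[X,Y]=XY-YX$; $gl(n,\mathbb{R})$ is the Lie algebra of all real $n\times n$ matrices. *)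

(* Defs.v *)
From HB Require Import structures.
From mathcomp Require Import all_boot all_order all_algebra.
From mathcomp Require Import reals.
Set Implicit Arguments. Unset Strict Implicit. Unset Printing Implicit Defensive.
Import Order.TTheory GRing.Theory Num.Theory.
Local Open Scope ring_scope.

Definition graph_of (R : ringType) (n : nat) (A : 'M[R]_n) : rel 'I_n :=
  fun k j => (k != j) && (A k j != 0).

Definition graph_connected (T : finType) (e : rel T) : Prop :=
  forall u v : T, connect e u v.

(* Zero forcing: the set of vertices that eventually become black when
   starting with exactly S black and repeatedly applying the color-change rule
   (a black vertex u forces w if w is the unique white neighbour of u). *)
Inductive zf_black (T : finType) (e : rel T) (S : {set T}) : T -> Prop :=
| zf_init v : v \in S -> zf_black e S v
| zf_force u w : zf_black e S u -> e u w ->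
    (forall x, e u x -> x != w -> zf_black e S x) -> zf_black e S w.

Definition zero_forcing_set (T : finType) (e : rel T) (S : {set T}) : Prop :=
  forall v : T, zf_black e S v.

Definition lie_bracket (R : ringType) (n : nat) (X Y : 'M[R]_n) : 'M[R]_n :=
  X *m Y - Y *m X.

Inductive lie_gen (R : ringType) (n : nat) (G : 'M[R]_n -> Prop) : 'M[R]_n -> Prop :=
| lg_gen X : G X -> lie_gen G X
| lg_zero : lie_gen G 0
| lg_add X Y : lie_gen G X -> lie_gen G Y -> lie_gen G (X + Y)
| lg_scale (c : R) X : lie_gen G X -> lie_gen G (c *: X)
| lg_bracket X Y : lie_gen G X -> lie_gen G Y -> lie_gen G (lie_bracket X Y).

(* Main.v *)
Require Import Defs.
From HB Require Import structures.
From mathcomp Require Import all_boot all_order all_algebra.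
From mathcomp Require Import reals ring.
Import Order.TTheory GRing.Theory Num.Theory.
Local Open Scope ring_scope.

Ltac cases := repeat match goal with
 | H : is_true (?a != ?a) |- _ => by rewrite eqxx in H
 | |- context[?a == ?b] => is_var a; is_var b;
   let H := fresh "H" in let H' := fresh "H" in
   case: (eqVneq a b) => [?|H]; [subst; rewrite ?eqxx /= |
     have H' : b != a by rewrite eq_sym];
   rewrite ?(negPf H) ?(negPf H') /=
 end.

Section S.
Variables (R : realType) (n : nat) (G : 'M[R]_n -> Prop).
Local Notation L := (lie_gen G).
Local Notation E i j := (delta_mx i j : 'M[R]_n).

Lemma lgN X : L X -> L (- X).
Proof. by move=> h; rewrite -scaleN1r; apply: lg_scale. Qed.
Lemma lgB X Y : L X -> L Y -> L (X - Y).
Proof. by move=> hx hy; apply: lg_add => //; apply: lgN. Qed.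
Lemma lg_sum (I : Type) (r : seq I) (P : pred I) F :
  (forall i, P i -> L (F i)) -> L (\sum_(i <- r | P i) F i).
Proof. move=> h; apply: big_ind => //; [exact: lg_zero | exact: lg_add]. Qed.

Lemma mulE_l a b (X : 'M[R]_n) i j : (E a b *m X) i j = (i == a)%:R * X b j.
Proof.
rewrite mxE (bigD1 b) //= big1 ?addr0; first by rewrite mxE eqxx andbT.
by move=> l /negPf hl; rewrite mxE hl andbF mul0r.
Qed.
Lemma mulE_r a b (X : 'M[R]_n) i j : (X *m E a b) i j = X i a * (j == b)%:R.
Proof.
rewrite mxE (bigD1 a) //= big1 ?addr0; first by rewrite mxE eqxx.
by move=> l /negPf hl; rewrite mxE hl mulr0.
Qed.
Lemma eB (X Y : 'M[R]_n) i j : (X - Y) i j = X i j - Y i j.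
Proof. by rewrite !mxE. Qed.
Lemma eD (X Y : 'M[R]_n) i j : (X + Y) i j = X i j + Y i j.
Proof. by rewrite !mxE. Qed.
Lemma eN (X : 'M[R]_n) i j : (- X) i j = - X i j.
Proof. by rewrite !mxE. Qed.
Lemma eZ c (X : 'M[R]_n) i j : (c *: X) i j = c * X i j.
Proof. by rewrite !mxE. Qed.
Lemma eE a b i j : E a b i j = ((i == a) && (j == b))%:R.
Proof. by rewrite mxE. Qed.
Lemma brE k X i j : lie_bracket (E k k) X i j = (i == k)%:R * X k j - X i k * (j == k)%:R.
Proof. by rewrite /lie_bracket eB mulE_l mulE_r. Qed.

Definition zrc k (X : 'M[R]_n) := \matrix_(i, j) if (i == k) || (j == k) then 0 else X i j.

Lemma zrcE k X : zrc k X = X - lie_bracket (E k k) (lie_bracket (E k k) X) - X k k *: E k k.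
Proof.
apply/matrixP => i j; rewrite [LHS]mxE eB eB !brE eZ eE.
cases; ring.
Qed.

Definition zl (s : seq 'I_n) (X : 'M[R]_n) :=
  \matrix_(i, j) if (i \in s) || (j \in s) then 0 else X i j.

Lemma zl_L s X : (forall k, k \in s -> L (E k k)) -> L X -> L (zl s X).
Proof.
elim: s X => [|k s IH] X hs hX.
  by have -> : zl [::] X = X by apply/matrixP => i j; rewrite mxE.
have -> : zl (k :: s) X = zrc k (zl s X).
  apply/matrixP => i j; rewrite !mxE !in_cons.
  by case: (i == k); case: (j == k); case: (i \in s); case: (j \in s).
have hk := hs k (mem_head _ _).
have hL : L (zl s X) by apply: IH => // k' hk'; apply: hs; rewrite in_cons hk' orbT.
rewrite zrcE; apply: lgB; [apply: lgB => //|apply: lg_scale => //].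
by apply: lg_bracket => //; apply: lg_bracket.
Qed.

Lemma Ltrick u w : u != w -> L (E u u) -> L (E u w + E w u) ->
  [/\ L (E u w), L (E w u) & L (E w w)].
Proof.
move=> huw hu hF.
set F := E u w + E w u.
have hG : lie_bracket (E u u) F = E u w - E w u.
  apply/matrixP => i j; rewrite brE !(eD, eN, eE); cases; ring.
have h1 : E u w = 2^-1 *: (F + lie_bracket (E u u) F).
  apply/matrixP => i j; rewrite hG eZ !(eD, eN, eE); by cases; field.
have h1L : L (E u w) by rewrite h1; apply: lg_scale; apply: lg_add => //; apply: lg_bracket.
have h2L : L (E w u).
  have -> : E w u = F - E u w by rewrite /F addrC addKr.
  exact: lgB.
split => //.
have -> : E w w = E u u + 2^-1 *: lie_bracket F (lie_bracket (E u u) F).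
  rewrite hG /lie_bracket /F !(mulmxDl, mulmxDr, mulmxBl, mulmxBr, mulmxN, mulNmx, mul_delta_mx_cond).
  rewrite !eqxx (negPf huw) (eq_sym w u) (negPf huw) /= ?mulr0n ?mulr1n.
  apply/matrixP => i j; rewrite !mxE; by cases; field.
apply: lg_add => //; apply: lg_scale; apply: lg_bracket => //; by apply: lg_bracket.
Qed.

Lemma force_step (A : 'M[R]_n) u w : A^T = A -> u != w -> A u w != 0 -> L A -> L (E u u) ->
  (forall x, graph_of A u x -> x != w -> L (E x x)) -> L (E w w).
Proof.
move=> hA huw hAuw hLA hu hx.
have hs : forall a b, A a b = A b a.
  by move=> a b; rewrite -{1}hA mxE.
set Y := lie_bracket (E u u) (lie_bracket (E u u) A).
set s := [seq k <- enum 'I_n | graph_of A u k && (k != w)].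
have hsm : forall k, (k \in s) = graph_of A u k && (k != w).
  by move=> k; rewrite mem_filter mem_enum andbT.
clearbody s.
have hY : L (zl s Y).
  apply: zl_L; last by apply: lg_bracket => //; apply: lg_bracket.
  by move=> k; rewrite hsm => /andP[h1 h2]; exact: hx.
have eq : zl s Y = A u w *: (E u w + E w u).
  apply/matrixP => i j; rewrite [LHS]mxE !hsm /graph_of.
  rewrite !brE eZ !eD !eE ?(hs i u) ?(hs j u).
  case: (eqVneq (A u i) 0) => hi; case: (eqVneq (A u j) 0) => hj;
  rewrite ?hi ?hj ?eqxx /=; cases;
  rewrite ?hi ?hj ?eqxx ?andbF ?andbT ?orbF ?orbT /=;
  try (by rewrite hi eqxx in hAuw); try (by rewrite hj eqxx in hAuw).
  all: try ring.
have hF : L (E u w + E w u).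
  have -> : E u w + E w u = (A u w)^-1 *: zl s Y by rewrite eq scalerA mulVf ?scale1r.
  exact: lg_scale.
by case: (Ltrick u w huw hu hF).
Qed.

Lemma edge_L (A : 'M[R]_n) u w : A^T = A -> u != w -> A u w != 0 -> L A ->
  (forall k, L (E k k)) -> L (E u w).
Proof.
move=> hA huw hAuw hLA hd.
have hs : forall a b, A a b = A b a.
  by move=> a b; rewrite -{1}hA mxE.
set s := [seq k <- enum 'I_n | (k != u) && (k != w)].
have hsm : forall k, (k \in s) = (k != u) && (k != w).
  by move=> k; rewrite mem_filter mem_enum andbT.
clearbody s.
have hY : L (zl s A - A u u *: E u u - A w w *: E w w).
  apply: lgB; [apply: lgB|]; [exact: zl_L|exact: lg_scale|exact: lg_scale].
have eq : zl s A - A u u *: E u u - A w w *: E w w = A u w *: (E u w + E w u).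
  apply/matrixP => i j; rewrite eB eB [zl _ _ _ _]mxE !hsm !eZ !eD !eE.
  cases; rewrite ?(hs w u) ?eqxx ?andbF ?andbT ?orbF ?orbT /=; ring.
have hF : L (E u w + E w u).
  have -> : E u w + E w u = (A u w)^-1 *: (zl s A - A u u *: E u u - A w w *: E w w)
    by rewrite eq scalerA mulVf ?scale1r.
  exact: lg_scale.
by case: (Ltrick u w huw (hd u) hF).
Qed.
End S.

Theorem theorem4p1 (R : realType) (n : nat) (A : 'M[R]_n) (S : {set 'I_n}) :
  A^T = A ->
  graph_connected (graph_of A) ->
  ((forall k j : 'I_n, k != j -> A k j != 0 -> 0 < A k j) \/
   (forall k j : 'I_n, k != j -> A k j != 0 -> A k j < 0)) ->
  zero_forcing_set (graph_of A) S ->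
  forall M : 'M[R]_n,
    lie_gen (fun X : 'M[R]_n => X = A \/ exists2 j : 'I_n, j \in S & X = delta_mx j j) M.
Proof.
move=> hA hconn _ hzf M.
set G := (fun X : 'M[R]_n => X = A \/ exists2 j : 'I_n, j \in S & X = delta_mx j j).
have hLA : lie_gen G A by apply: lg_gen; left.
have hdiag : forall v, lie_gen G (delta_mx v v).
  move=> v; elim: (hzf v) => [v' hv'|u' w' _ IHu he _ IHx].
    by apply: lg_gen; right; exists v'.
  move: he; rewrite /graph_of => /andP[huw hAuw].
  exact: (@force_step R n G A u' w' hA huw hAuw hLA IHu IHx).
have hoff : forall u w, graph_of A u w -> lie_gen G (delta_mx u w).
  move=> u w /andP[huw hAuw]; exact: (@edge_L R n G A u w hA huw hAuw hLA hdiag).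
have htr : forall a b c, lie_gen G (delta_mx a b) -> lie_gen G (delta_mx b c) ->
    lie_gen G (delta_mx a c).
  move=> a b c hab hbc; case: (eqVneq a c) => [->|hac]; first exact: hdiag.
  have -> : delta_mx a c = lie_bracket (delta_mx a b) (delta_mx b c) :> 'M[R]_n.
    rewrite /lie_bracket !mul_delta_mx_cond eqxx eq_sym (negPf hac) /=.
    by rewrite mulr1n mulr0n subr0.
  exact: lg_bracket.
have hall : forall u v, lie_gen G (delta_mx u v).
  move=> u v; case/connectP: (hconn u v) => p.
  elim: p u => [|x p IH] u /=; first by move=> _ ->; apply: hdiag.
  case/andP => hux hp hl; exact: (htr _ _ _ (hoff _ _ hux) (IH x hp hl)).
rewrite (matrix_sum_delta M); apply: lg_sum => i _; apply: lg_sum => j _.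
exact: lg_scale.
Qed.
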